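(* Let $\mathcal{A}$ be a fixed (non-random) partition of $\Theta$ into measurable sets, and let $(\theta_1,\mathbf{X}_1),\dots,(\theta_B,\mathbf{X}_B),(\theta,\mathbf{X})$ be i.i.d. pairs with $\theta_b \sim r$ and $\mathbf{X}_b \mid \theta_b$ distributed according to the statistical model at $\theta_b$ (and likewise for $(\theta,\mathbf{X})$). Fix $A \in \mathcal{A}$ with $\mathbb{P}(\theta \in A) > 0$ and $\alpha\in(0,1)$. Let $I_A = \{b \in \{1,\dots,B\} : \theta_b \in A\}$, define for $t\in\mathbb{R}$ $$\widehat H_B(t \mid A) = \frac{1}{|I_A|+1}\Big(\sum_{b \in I_A} \mathbb{I}\big(\tau(\mathbf{X}_b,\theta_b) \le t\big) + 1\Big),$$ and let $\widehat C_{A,B} = \inf\{t \in \mathbb{R} : \widehat H_B(t\mid A) \ge \alpha\}$ (the adjusted $\alpha$-quantile; possibly $-\infty$). For $\theta' \in A$ set $\widehat C_{\theta',B} := \widehat C_{A,B}$, and let $\widehat R_B(\mathbf{X}) = \{\theta' \in \Theta : \tau(\mathbf{X},\theta') \ge \widehat C_{\theta',B}\}$. Then $$\mathbb{P}\big(\theta \in \widehat R_B(\mathbf{X}) \mid \theta \in A\big) \ge 1-\alpha,$$ where the probability is over both the simulated data and the new pair $(\theta,\mathbf{X})$.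
   Context: A statistical model gives, for each parameter $\theta \in \Theta$, a distribution of the data $\mathbf{X}\in\mathcal{X}$; $r$ is a reference probability distribution on $\Theta$. A fixed measurable function $\tau : \mathcal{X}\times\Theta \to \mathbb{R}$ (a test statistic) is given, and for every $\theta$ the conditional distribution of $\tau(\mathbf{X},\theta)$ given $\theta$ is continuous (has no atoms). *)

(* Defs.v *)
From HB Require Import structures.
From mathcomp Require Import all_boot all_order all_algebra.
From mathcomp Require Import all_classical all_reals all_analysis.
Set Implicit Arguments. Unset Strict Implicit. Unset Printing Implicit Defensive.
Import Order.TTheory GRing.Theory Num.Theory.
Local Open Scope classical_set_scope.
Local Open Scope ring_scope.

Definition measurable_partition {d} {T : measurableType d} (Apart : set (set T)) :=
  [/\ (forall A, Apart A -> measurable A),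
      (forall A1 A2, Apart A1 -> Apart A2 -> A1 `&` A2 !=set0 -> A1 = A2) &
      (forall t, exists A, Apart A /\ A t)].

Definition mutually_independent {d dV} {Omega : measurableType d}
    {V : measurableType dV} {R : realType} (P : probability Omega R)
    {I : finType} (Z : I -> Omega -> V) :=
  forall (J : {set I}) (E : I -> set V), (forall i, measurable (E i)) ->
    P (\bigcap_(i in [set` J]) (Z i @^-1` E i)) = (\prod_(i in J) P (Z i @^-1` E i))%E.

(* The pair (th, Xv) has joint law "th ~ r, Xv | th ~ M th". *)
Definition has_joint_law {d dT dX} {Omega : measurableType d}
    {Theta : measurableType dT} {X : measurableType dX} {R : realType}
    (P : probability Omega R) (r : probability Theta R) (M : R.-pker Theta ~> X)
    (th : Omega -> Theta) (Xv : Omega -> X) :=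
  forall (S : set Theta) (U : set X), measurable S -> measurable U ->
    P (th @^-1` S `&` Xv @^-1` U) = (\int[r]_(t in S) M t U)%E.

Definition all_pairs {Omega Theta X : Type} {B : nat}
    (th : 'I_B -> Omega -> Theta) (Xs : 'I_B -> Omega -> X)
    (th0 : Omega -> Theta) (X0 : Omega -> X) : option 'I_B -> Omega -> Theta * X :=
  fun o w => match o with Some b => (th b w, Xs b w) | None => (th0 w, X0 w) end.

Definition Hhat {Omega Theta X : Type} {R : realType} {B : nat}
    (tau : X -> Theta -> R) (th : 'I_B -> Omega -> Theta) (Xs : 'I_B -> Omega -> X)
    (A : set Theta) (w : Omega) (t : R) : R :=
  ((\sum_(b < B | th b w \in A) (nat_of_bool (tau (Xs b w) (th b w) <= t)%R)%:R) + 1)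
  / ((#|[set b : 'I_B | th b w \in A]|)%:R + 1).

Definition Chat {Omega Theta X : Type} {R : realType} {B : nat}
    (tau : X -> Theta -> R) (th : 'I_B -> Omega -> Theta) (Xs : 'I_B -> Omega -> X)
    (alpha : R) (A : set Theta) (w : Omega) : \bar R :=
  ereal_inf [set t%:E | t in [set t : R | alpha <= Hhat tau th Xs A w t]].

Definition Rhat {Omega Theta X : Type} {R : realType} {B : nat}
    (Apart : set (set Theta))
    (tau : X -> Theta -> R) (th : 'I_B -> Omega -> Theta) (Xs : 'I_B -> Omega -> X)
    (alpha : R) (w : Omega) (x : X) : set Theta :=
  [set th' | forall A', Apart A' -> A' th' ->
     (Chat tau th Xs alpha A' w <= (tau x th')%:E)%E].

Definition condprob {d} {Omega : measurableType d} {R : realType}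
    (P : probability Omega R) (E F : set Omega) : R :=
  fine (P (E `&` F)) / fine (P F).

(* Main.v *)
Require Import Defs.
From HB Require Import structures.
From mathcomp Require Import all_boot all_order all_algebra.
From mathcomp Require Import all_classical all_reals all_analysis.
Import Order.TTheory GRing.Theory Num.Theory.
Local Open Scope classical_set_scope.
Local Open Scope ring_scope.
From mathcomp Require Import measurable_realfun.
Lemma count_bound (R : realType) (I : finType) (a : I -> bool) (s : I -> R) (m : R) :
  0 <= m ->
  \sum_i ((a i && (\sum_j (a j && (s j <= s i))%:R < m))%:R : R) <= m.
Proof.
move=> m0.
set P := fun i => a i && (\sum_j (a j && (s j <= s i))%:R < m).
case: (pickP P) => [i0 Hi0|none]; last first.
  by rewrite big1 // => i _; have := none i; rewrite /P => ->.
case: (arg_maxP s Hi0) => i Pi Hmax.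
have Pi' := Pi; rewrite /P in Pi'; case/andP: Pi' => ai lti.
apply: le_trans (ltW lti).
apply: ler_sum => j _.
have [Pj|Pj] := boolP (P j); last first.
  by rewrite -/(P j) (negbTE Pj) ler0n.
rewrite -/(P j) Pj.
by have := Hmax j Pj; rewrite /P in Pj; case/andP: Pj => -> _ /= ->.
Qed.
Lemma Chat_leP (R : realType) (Omega Theta X : Type) (B : nat)
  (tau : X -> Theta -> R) (th : 'I_B -> Omega -> Theta) (Xs : 'I_B -> Omega -> X)
  (alpha : R) (A : set Theta) (w : Omega) (s0 : R) :
  (Chat tau th Xs alpha A w <= s0%:E)%E <-> alpha <= Hhat tau th Xs A w s0.
Proof.
split; last first.
  by move=> H; apply: ge_ereal_inf; exists s0%:E => //; exists s0.
apply: contraPP => /negP; rewrite -ltNge => Hlt.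
apply/negP; rewrite -ltNge.
set x := fun b => tau (Xs b w) (th b w).
set m := \big[Order.min/s0 + 1]_(b | (th b w \in A) && (s0 < x b)) x b.
have s0m : s0 < m.
  by apply: lt_bigmin => [|b /andP[]//]; rewrite ltrDl.
apply: (lt_le_trans (y := m%:E)); first by rewrite lte_fin.
apply/ereal_infP => _ [t /= Ht <-]; rewrite lee_fin.
rewrite leNgt; apply/negP => tm.
have : Hhat tau th Xs A w t <= Hhat tau th Xs A w s0.
  rewrite /Hhat ler_wpM2r // ?invr_ge0 ?addr_ge0 // lerD2r.
  apply: ler_sum => b Ab.
  case xt: (tau (Xs b w) (th b w) <= t) => //=.
  case xs: (tau (Xs b w) (th b w) <= s0) => //=.
  exfalso; move: xs; rewrite leNgt => /negbFE xs.
  have : m <= x b by apply: bigmin_le_cond; rewrite Ab xs.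
  by rewrite leNgt (le_lt_trans (xt : x b <= t) tm).
by move=> H; move: (le_lt_trans Ht (le_lt_trans H Hlt)); rewrite ltxx.
Qed.
Definition cylG (I : Type) {dV} (V : measurableType dV) : set (set (I -> V)) :=
  [set S | exists E : I -> set V, (forall i, measurable (E i)) /\
     S = [set f | forall i, E i (f i)]].
Definition FS (I : Type) {dV} (V : measurableType dV) := g_sigma_algebraType (cylG I V).

Section Exch.
Context (R : realType) d dV (O : measurableType d) (V : measurableType dV) (I : finType).
Variable (P : probability O R).

Lemma measZ (Zf : I -> O -> V) : (forall i, measurable_fun setT (Zf i)) ->
  measurable_fun setT ((fun w i => Zf i w) : O -> FS I V).
Proof.
move=> mZf.
apply: (@measurability _ _ O (FS I V) setT _ (cylG I V)) => //.
move=> _ [S [E [mE ->]] <-].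
rewrite setTI.
have -> : (fun w i => Zf i w) @^-1` [set f | forall i, E i (f i)] =
          \bigcap_(i in setT) (Zf i @^-1` E i).
  by apply/seteqP; split => w /= H i; [move=> _; apply: H|apply: H].
apply: fin_bigcap_measurable; first exact: finite_finset.
move=> i _; rewrite -(setTI (Zf i @^-1` E i)); exact: mZf.
Qed.

Lemma exch (Zf : I -> O -> V) (i0 : I) (mZf : forall i, measurable_fun setT (Zf i))
  (Hind : mutually_independent P Zf)
  (Hmarg : forall i E, measurable E -> P (Zf i @^-1` E) = P (Zf i0 @^-1` E))
  (sg : I -> I) (sgK : involutive sg) (F : set (FS I V)) : measurable F ->
  P ((fun w i => Zf i w) @^-1` F) = P ((fun w i => Zf (sg i) w) @^-1` F).
Proof.
have mZ := measZ Zf mZf.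
have mZ' : measurable_fun setT ((fun w i => Zf (sg i) w) : O -> FS I V).
  by apply: measZ => i; exact: mZf.
move=> mF.
have key : forall E : I -> set V, (forall i, measurable (E i)) ->
    P [set w | forall i, E i (Zf i w)] = (\prod_i P (Zf i0 @^-1` E i))%E.
  move=> E mE.
  have := Hind [set: I]%SET E mE.
  have -> : \bigcap_(i in [set` [set: I]%SET]) (Zf i @^-1` E i) = [set w | forall i, E i (Zf i w)].
    by apply/seteqP; split => w /= H i; [apply: H; rewrite /= inE|move=> _; apply: H].
  move=> ->; rewrite (eq_bigl xpredT) => [|i]; last by rewrite inE.
  by apply: eq_bigr => i _; exact: Hmarg.
pose m1 := measure_function_pushforward__canonical__measure_function_Measure P mZ.
pose m2 := measure_function_pushforward__canonical__measure_function_Measure P mZ'.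
apply: (@measure_unique _ R (FS I V) (cylG I V) (fun=> setT) erefl _ _ _ m1 m2) => //.
- move=> _ _ [E [mE ->]] [E' [mE' ->]].
  exists (fun i => E i `&` E' i); split; first by move=> i; exact: measurableI.
  by apply/seteqP; split => f /=; [move=> [H1 H2] i; split|move=> H; split => i; case: (H i)].
- by move=> _; exists (fun=> setT); split => //; apply/seteqP; split.
- by apply/seteqP; split => // x _; exists 0%N.
- move=> _ [E [mE ->]]; rewrite /pushforward /=.
  rewrite /pushforward key //.
  have -> : (fun w i => Zf (sg i) w) @^-1` [set f | forall i, E i (f i)] =
            [set w | forall i, E (sg i) (Zf i w)].
    apply/seteqP; split => w /= H i; first by have := H (sg i); rewrite sgK.
    by have := H (sg i); rewrite sgK.
  rewrite (key (fun i => E (sg i))); last by move=> i; exact: mE.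
  by rewrite (reindex_inj (inv_inj sgK)).
- by move=> _; rewrite /= /pushforward preimage_setT probability_setT ltry.
Qed.
End Exch.
Lemma marg_eq (R : realType) d dT dX (O : measurableType d) (Theta : measurableType dT)
  (X : measurableType dX) (P : probability O R) (r : probability Theta R)
  (M : R.-pker Theta ~> X) (t1 t2 : O -> Theta) (x1 x2 : O -> X) :
  measurable_fun setT (fun w => (t1 w, x1 w)) ->
  measurable_fun setT (fun w => (t2 w, x2 w)) ->
  has_joint_law P r M t1 x1 -> has_joint_law P r M t2 x2 ->
  forall E, measurable E ->
  P ((fun w => (t1 w, x1 w)) @^-1` E) = P ((fun w => (t2 w, x2 w)) @^-1` E).
Proof.
move=> m1 m2 L1 L2 E mE.
pose mu1 := measure_function_pushforward__canonical__measure_function_Measure P m1.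
pose mu2 := measure_function_pushforward__canonical__measure_function_Measure P m2.
apply: (@measure_unique _ R (Theta * X)%type
   [set A `*` B | A in measurable & B in measurable] (fun=> setT)
   (measurable_prod_measurableType _ _) _ _ _ mu1 mu2) => //.
- move=> _ _ [A1 mA1 [B1 mB1 <-]] [A2 mA2 [B2 mB2 <-]].
  rewrite -setXI; exists (A1 `&` A2); first exact: measurableI.
  by exists (B1 `&` B2) => //; exact: measurableI.
- by move=> _; exists setT => //; exists setT => //; rewrite setXTT.
- by apply/seteqP; split => // x _; exists 0%N.
- move=> _ [A mA [B mB <-]]; rewrite /= /pushforward.
  have -> : (fun w => (t1 w, x1 w)) @^-1` (A `*` B) = t1 @^-1` A `&` x1 @^-1` B by [].
  have -> : (fun w => (t2 w, x2 w)) @^-1` (A `*` B) = t2 @^-1` A `&` x2 @^-1` B by [].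
  by rewrite L1 // L2.
- by move=> _; rewrite /= /pushforward preimage_setT probability_setT ltry.
Qed.
Lemma sum_option (R : realType) (T : finType) (F : option T -> R) :
  \sum_(o : option T) F o = F None + \sum_(t : T) F (Some t).
Proof.
rewrite (bigD1 None) //=; congr (_ + _).
rewrite (reindex_omap Some id) /=; last by case.
by apply: eq_bigl => t; rewrite eqxx.
Qed.
Lemma mem_setb (T : Type) (b : T -> bool) x : (x \in [set y | b y]) = b x.
Proof. by apply/idP/idP; rewrite inE. Qed.
Section Fdefs.
Context (R : realType) dT dX (Theta : measurableType dT) (X : measurableType dX)
  (tau : X -> Theta -> R) (A : set Theta) (alpha : R) (I : finType).
Definition aV (v : Theta * X) : bool := v.1 \in A.
Definition sV (v : Theta * X) : R := tau v.2 v.1.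
Definition cntF (f : I -> Theta * X) (i : I) : R :=
  \sum_j ((aV (f j) && (sV (f j) <= sV (f i)))%:R).
Definition NF (f : I -> Theta * X) : R := \sum_j ((aV (f j))%:R).
Definition Fb (f : I -> Theta * X) (i : I) : bool :=
  aV (f i) && (cntF f i < alpha * NF f).

Lemma Fb_perm (sg : I -> I) (sgK : involutive sg) f i :
  Fb (fun j => f (sg j)) i = Fb f (sg i).
Proof.
rewrite /Fb /cntF /NF; congr (_ && (_ < _ * _)).
  by rewrite (reindex_inj (inv_inj sgK)) /=; apply: eq_bigr => j _; rewrite sgK.
by rewrite (reindex_inj (inv_inj sgK)) /=; apply: eq_bigr => j _; rewrite sgK.
Qed.

Lemma boolR_meas d (T : measurableType d) (b : T -> bool) :
  measurable_fun setT b -> measurable_fun setT (fun x => (b x)%:R : R).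
Proof.
move=> mb.
rewrite (_ : (fun x => _) = (fun x => if b x then 1 else 0)); last first.
  by apply/funext => x; case: (b x).
by apply: measurable_fun_ifT => //; exact: measurable_cst.
Qed.

Lemma measFb (mA : measurable A)
  (tau_meas : measurable_fun setT (fun p : X * Theta => tau p.1 p.2)) (i : I) :
  measurable ([set f | Fb f i] : set (FS I (Theta * X)%type)).
Proof.
have proj j : measurable_fun setT (fun f : FS I (Theta * X)%type => f j).
  move=> _ E mE; rewrite setTI; apply: sub_sigma_algebra.
  exists (fun k => if k == j then E else setT); split.
    by move=> k; case: ifP.
  apply/seteqP; split => f /=.
    by move=> Ef k; case: ifP => // /eqP ->.
  by move=> H; have := H j; rewrite eqxx.
have ma j : measurable_fun setT (fun f : FS I (Theta * X)%type => aV (f j)).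
  apply: (measurable_fun_bool true) => //.
  rewrite setTI.
  have -> : (fun f : FS I (Theta * X)%type => aV (f j)) @^-1` [set true] =
            (fun f : FS I (Theta * X)%type => f j) @^-1` (A `*` setT).
    apply/seteqP; split => f /=; rewrite /aV.
      by move=> H; split => //; exact/set_mem.
    by move=> [H _]; exact/mem_set.
  rewrite -(setTI (_ @^-1` _)); apply: proj => //.
  exact: measurableX.
have ms j : measurable_fun setT (fun f : FS I (Theta * X)%type => sV (f j)).
  rewrite /sV.
  apply: (@measurableT_comp _ _ _ _ _ _ (fun p : X * Theta => tau p.1 p.2) _
     (fun f : FS I (Theta * X)%type => unstable.swap (f j))) => //.
  exact: (measurableT_comp (@measurable_swap _ _ Theta X) (proj j)).
have mcnt : measurable_fun setT (fun f : FS I (Theta * X)%type => cntF f i).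
  apply: measurable_sum => j; apply: boolR_meas.
  by apply: measurable_and => //; apply: measurable_fun_ler.
have mN : measurable_fun setT (fun f : FS I (Theta * X)%type => NF f).
  by apply: measurable_sum => j; apply: boolR_meas.
have mb : measurable_fun setT (fun f : FS I (Theta * X)%type => Fb f i).
  apply: measurable_and => //; apply: measurable_fun_ltr => //.
  exact: measurable_funM.
have -> : [set f : FS I (Theta * X)%type | Fb f i] =
   (fun f : FS I (Theta * X)%type => Fb f i) @^-1` [set true].
  by apply/seteqP; split.
by rewrite -(setTI (_ @^-1` _)); exact: mb.
Qed.
End Fdefs.

Arguments measZ {d dV O V I} Zf.
Arguments exch {R d dV O V I P Zf i0} mZf Hind Hmarg {sg} sgK {F} _.
Arguments marg_eq {R d dT dX O Theta X P r M t1 t2 x1 x2}.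
Arguments Fb_perm {R dT dX Theta X tau A alpha I sg} sgK f i.
Arguments measFb {R dT dX Theta X} tau {A} alpha {I} mA tau_meas i.
Arguments Fb {R dT dX Theta X} tau A alpha {I} f i.
Arguments aV {dT dX Theta X} A v.
Arguments sV {R dT dX Theta X} tau v.
Arguments cntF {R dT dX Theta X} tau A {I} f i.
Arguments NF {R dT dX Theta X} A {I} f.
Arguments count_bound {R I} a s {m}.

Definition swp (B : nat) (b : 'I_B) (o : option 'I_B) : option 'I_B :=
  if o == None then Some b else if o == Some b then None else o.

Lemma swpK B b : involutive (@swp B b).
Proof.
move=> [c|]; rewrite /swp /=; last by rewrite eqxx.
have [->|ne] := eqVneq c b; first by rewrite eqxx.
have ne' : (Some c == Some b) = false by apply/negbTE; apply: contra ne => /eqP [->].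
by rewrite ne' /= ne'.
Qed.

Arguments swpK {B}.

Theorem theorem2 (R : realType)
  (dT dX dO : measure_display)
  (Theta : measurableType dT) (X : measurableType dX) (Omega : measurableType dO)
  (r : probability Theta R) (M : R.-pker Theta ~> X)
  (tau : X -> Theta -> R)
  (tau_meas : measurable_fun setT (fun p : X * Theta => tau p.1 p.2))
  (tau_cont : forall (t : Theta) (c : R), M t [set x | tau x t = c] = 0%E)
  (Apart : set (set Theta)) (HApart : measurable_partition Apart)
  (P : probability Omega R) (B : nat)
  (th : 'I_B -> Omega -> Theta) (Xs : 'I_B -> Omega -> X)
  (th0 : Omega -> Theta) (X0 : Omega -> X)
  (Hmeas : forall o, measurable_fun setT (all_pairs th Xs th0 X0 o))
  (Hindep : mutually_independent P (all_pairs th Xs th0 X0))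
  (Hlaw : forall b, has_joint_law P r M (th b) (Xs b))
  (Hlaw0 : has_joint_law P r M th0 X0)
  (A : set Theta) (HA : Apart A) (HPA : (0 < P (th0 @^-1` A))%E)
  (alpha : R) (Halpha : 0 < alpha < 1) :
  1 - alpha <= condprob P [set w | Rhat Apart tau th Xs alpha w (X0 w) (th0 w)]
                           (th0 @^-1` A).
Proof.
have mA : measurable A by case: HApart => h _ _; exact: h.
have a0 : 0 < alpha by case/andP: Halpha.
pose I := option 'I_B.
pose Zf := all_pairs th Xs th0 X0.
pose Z : Omega -> FS I (Theta * X)%type := fun w i => Zf i w.
have mZ : measurable_fun setT Z := measZ Zf Hmeas.
pose E i := Z @^-1` [set f | Fb tau A alpha f i].
have mE i : measurable (E i).
  by rewrite -(setTI (E i)); apply: mZ => //; exact: measFb.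
pose Ai (i : I) := Zf i @^-1` (A `*` setT).
have mAi i : measurable (Ai i).
  by rewrite -(setTI (Ai i)); apply: Hmeas => //; exact: measurableX.
have margi : forall i Ev, measurable Ev -> P (Zf i @^-1` Ev) = P (Zf None @^-1` Ev).
  case => [b|] Ev mEv //.
  exact: (marg_eq (Hmeas (Some b)) (Hmeas None) (Hlaw b) Hlaw0).
have PE i : P (E i) = P (E None).
  case: i => [b|] //.
  rewrite /E (exch Hmeas Hindep margi (swpK b) (measFb tau alpha mA tau_meas None)).
  congr (P _); apply/seteqP; split => w /=.
    by rewrite (Fb_perm (swpK b) (fun k => Zf k w) None).
  by rewrite (Fb_perm (swpK b) (fun k => Zf k w) None).
have fP S : measurable S -> P S = (fine (P S))%:E.
  by move=> mS; rewrite fineK // fin_num_measure.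
have key : (\sum_(i : I) P (E i) <= \sum_(i : I) (alpha%:E * P (Ai i)))%E.
  have -> : (\sum_(i : I) P (E i) = \int[P]_w (\sum_(i : I) (\1_(E i) w)%:E))%E.
    rewrite ge0_integral_sum //; try (by move=> i; apply/measurable_EFinP; exact: measurable_indic);
      try (by move=> i w _; rewrite lee_fin).
    by apply: eq_bigr => i _; rewrite integral_indic // setIT.
  have -> : (\sum_(i : I) (alpha%:E * P (Ai i)) =
            \int[P]_w (\sum_(i : I) (alpha * \1_(Ai i) w)%:E))%E.
    rewrite ge0_integral_sum //; try (by move=> i; apply/measurable_EFinP;
        apply: measurable_funM => //; exact: measurable_indic);
      try (by move=> i w _; rewrite lee_fin mulr_ge0 // ltW).
    apply: eq_bigr => i _.
    rewrite (integralZl_indic _ (fun=> Ai i)) //; last by move=> /ltW; rewrite leNgt a0.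
    by rewrite integral_indic // setIT.
  apply: ge0_le_integral => //.
  - by move=> w _; apply: sume_ge0 => i _; rewrite lee_fin.
  - by apply: emeasurable_sum => i; apply/measurable_EFinP; exact: measurable_indic.
  - apply: emeasurable_sum => i; apply/measurable_EFinP.
    by apply: measurable_funM => //; exact: measurable_indic.
  move=> w _; rewrite !sumEFin lee_fin.
  have memE i : (w \in E i) = Fb tau A alpha (Z w) i.
    by apply/idP/idP => [/set_mem|h] //; exact/mem_set.
  have memA i : (w \in Ai i) = aV A (Z w i).
    apply/idP/idP => [/set_mem [h _]|h]; first exact/mem_set.
    by apply/mem_set; split => //; exact/set_mem.
  under eq_bigr do rewrite indicE memE.
  under [X in _ <= X]eq_bigr do rewrite indicE memA.
  rewrite -mulr_sumr.
  apply: (count_bound (fun i => aV A (Z w i)) (fun i => sV tau (Z w i))).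
  by apply: mulr_ge0; [exact: ltW|apply: sumr_ge0].
set A0 := th0 @^-1` A.
have A0E : A0 = Ai None.
  by apply/seteqP; split => w /=; [move=> h; split|case].
have mA0 : measurable A0 by rewrite A0E.
have q_le : fine (P (E None)) <= alpha * fine (P A0).
  have S1 : (\sum_(i : I) P (E i) = P (E None) *+ #|{: option 'I_B}|)%E.
    by rewrite (eq_bigr (fun=> P (E None))) ?sumr_const // => i _; exact: PE.
  have S2 : (\sum_(i : I) (alpha%:E * P (Ai i)) = (alpha%:E * P A0) *+ #|{: option 'I_B}|)%E.
    rewrite (eq_bigr (fun=> (alpha%:E * P A0)%E)) ?sumr_const // => i _.
    by rewrite A0E /Ai; congr (_ * _)%E; apply: margi; exact: measurableX.
  move: key; rewrite S1 S2.
  rewrite (fP _ (mE None)) (fP _ mA0) -EFinM -!EFin_natmul lee_fin.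
  by rewrite ler_pMn2r // card_option.
have EA : E None `<=` A0.
  by move=> w; rewrite /E /= /Fb => /andP [h _]; exact/set_mem.
have HH w : A (th0 w) ->
    (alpha <= Hhat tau th Xs A w (tau (X0 w) (th0 w))) = ~~ Fb tau A alpha (Z w) None.
  move=> Aw.
  rewrite /Fb /cntF /NF !sum_option /= /aV /sV /= (mem_set Aw) lexx /=.
  rewrite /Hhat ler_pdivlMr; last by rewrite ltr_wpDl.
  have cardK : (#|[set b | th b w \in A]|)%:R = \sum_b ((th b w \in A))%:R :> R.
    rewrite -sum1_card natr_sum big_mkcond /=; apply: eq_bigr => b _.
    by rewrite mem_setb; case: (_ \in _).
  rewrite cardK big_mkcond /= -leNgt [1 + _]addrC [X in _ <= X]addrC.
  congr (_ <= 1 + _); rewrite big_mkcond; apply: eq_bigr => b _.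
  by case: (_ \in _).
have Cov : [set w | Rhat Apart tau th Xs alpha w (X0 w) (th0 w)] `&` A0 = A0 `\` E None.
  apply/seteqP; split => w /=.
  - move=> [HR HA0]; split => // HE.
    have /Chat_leP := HR A HA HA0; rewrite HH // => /negP; apply.
    exact: HE.
  - move=> [HA0 HnE]; split => //.
    move=> A' HA' A'w.
    have -> : A' = A.
      by case: HApart => _ hp _; apply: hp => //; exists (th0 w).
    by apply/Chat_leP; rewrite HH //; apply/negP.
have p0 : 0 < fine (P A0) by move: HPA; rewrite (fP _ mA0) lte_fin.
rewrite /condprob Cov measureD //; last by rewrite ltey_eq fin_num_measure.
rewrite (setIidr EA) fineB ?fin_num_measure //.
by rewrite ler_pdivlMr // mulrBl mul1r lerD2l lerN2.
Qed.
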